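(* Let $\rho^A$ be a state, $R$ a reference system with $|\psi\rangle^{RA}$ a purification of $\rho^A$, and $\{\Lambda_x^A\}$ a POVM on $A$. Let \[ \sigma^{XR}:=\sum_xP_X(x)|x\rangle\langle x|^X\otimes\rho_x^R,\qquad P_X(x)=\operatorname{Tr}[\Lambda_x\rho],\quad \rho_x^R:=\frac{1}{\operatorname{Tr}[\Lambda_x\rho]}\big(\sqrt\rho\,\Lambda_x^T\sqrt\rho\big)^R . \] Then for any $0<\varepsilon\le\frac14$ and $0<\varepsilon'\le\min\{\frac\varepsilon3,\frac14\}$, \[ {}^{1}I_{\max}^{\varepsilon}(X:R)_{\sigma}\le\widetilde{H}_{\max}^{O(\varepsilon^2)}(A)_\rho-O(\log\varepsilon), \] \[ I_{\max}^{2\varepsilon}(X:R)_{\sigma}\le\widetilde{H}_{\max}^{O(\varepsilon^2)}(A)_\rho-O(\log\varepsilon)+O\Big(\log\frac{\varepsilon'^2}{12}\Big). \]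
   Context: Logs base 2; $O(\cdot)$ terms are bounded by universal constants times the indicated expressions. $\mathcal{B}^\delta(\rho)$: subnormalized states within purified distance $\delta$ of $\rho$ (using generalized fidelity $F(\rho,\sigma)=\|\sqrt\rho\sqrt\sigma\|_1+\sqrt{(1-\operatorname{Tr}\rho)(1-\operatorname{Tr}\sigma)}$). $D_{\max}(\rho\|\sigma)=\min\{\lambda:\rho\le2^\lambda\sigma\}$. $I_{\max}(A:B)_\rho:=D_{\max}(\rho^{AB}\|\rho^A\otimes\rho^B)$, $I_{\max}^\delta(A:B)_\rho:=\min_{\tilde\rho\in\mathcal{B}^\delta(\rho)}I_{\max}(A:B)_{\tilde\rho}$. Modified max-information: ${}^1I_{\max}(A:B)_\rho:=\min_{\sigma^B\text{ state}}D_{\max}(\rho^{AB}\|\rho^A\otimes\sigma^B)$, ${}^1I_{\max}^\delta(A:B)_\rho:=\min_{\rho'\in\mathcal{B}^\delta(\rho)}{}^1I_{\max}(A:B)_{\rho'}$. $\widetilde{H}_{\max}^\delta(A)_\rho:=\log|\operatorname{supp}(\rho')|$ where $\rho'$ is $\rho$ with its smallest eigenvalues summing to at most $\delta$ set to zero. The transpose $\Lambda_x^T$ is taken in the eigenbasis of $\rho$ used to define the purification. *)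

(* Defs.v *)
From HB Require Import structures.
From mathcomp Require Import all_boot all_order all_algebra.
From mathcomp Require Import sesquilinear spectral.
From mathcomp Require Import complex mxtens.
From mathcomp Require Import boolp classical_sets reals ereal exp.

Set Implicit Arguments.
Unset Strict Implicit.
Unset Printing Implicit Defensive.

Import Order.TTheory GRing.Theory Num.Theory Num.Def.
Local Open Scope ring_scope.
Local Open Scope complex_scope.

Section Quantum.
Variable R : realType.
Local Notation C := (R[i]).

Definition reC (z : C) : R := complex.Re z.

Definition adj {m n} (A : 'M[C]_(m, n)) : 'M[C]_(n, m) := map_mx conjC (A ^T).

Definition psdmx {n} (A : 'M[C]_n) : Prop :=
  adj A = A /\ forall v : 'rV[C]_n, 0 <= (v *m A *m adj v) 0 0.
Definition loewner_le {n} (A B : 'M[C]_n) : Prop := psdmx (B - A).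

Definition trR {n} (A : 'M[C]_n) : R := reC (\tr A).

Definition state {n} (rho : 'M[C]_n) : Prop := psdmx rho /\ \tr rho = 1.
Definition substate {n} (rho : 'M[C]_n) : Prop := psdmx rho /\ trR rho <= 1.

Definition povm {n k} (Lam : 'I_k -> 'M[C]_n) : Prop :=
  (forall x, psdmx (Lam x)) /\ \sum_(x < k) Lam x = 1%:M.

Definition sqrtm {n} (A : 'M[C]_n) : 'M[C]_n :=
  xget 0 [set B : 'M[C]_n | psdmx B /\ B *m B = A].

Definition trnorm {n} (M : 'M[C]_n) : R := trR (sqrtm (adj M *m M)).

Definition gfid {n} (rho sigma : 'M[C]_n) : R :=
  trnorm (sqrtm rho *m sqrtm sigma) + Num.sqrt ((1 - trR rho) * (1 - trR sigma)).
Definition purified_dist {n} (rho sigma : 'M[C]_n) : R :=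
  Num.sqrt (1 - gfid rho sigma ^+ 2).

Definition sball {n} (delta : R) (rho : 'M[C]_n) : set 'M[C]_n :=
  [set rho' | substate rho' /\ purified_dist rho rho' <= delta].

Definition log2 (x : R) : R := ln x / ln 2.

Definition Dmax {n} (rho sigma : 'M[C]_n) : \bar R :=
  ereal_inf [set (l%:E)%E | l in [set l : R | loewner_le rho ((2 `^ l)%:C *: sigma)]].

(* partial traces on a bipartite system A (dim m) (x) B (dim n), index
   (i,j) |-> mxtens_index (i,j), consistent with tensmx *)
Definition ptrB {m n} (M : 'M[C]_(m * n)) : 'M[C]_m :=
  \matrix_(i, k) \sum_(j < n) M (mxtens_index (i, j)) (mxtens_index (k, j)).
Definition ptrA {m n} (M : 'M[C]_(m * n)) : 'M[C]_n :=
  \matrix_(j, l) \sum_(i < m) M (mxtens_index (i, j)) (mxtens_index (i, l)).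

Definition Imax {m n} (rho : 'M[C]_(m * n)) : \bar R :=
  Dmax rho (ptrB rho *t ptrA rho).
Definition Imax_s {m n} (delta : R) (rho : 'M[C]_(m * n)) : \bar R :=
  ereal_inf [set Imax rho' | rho' in sball delta rho].

Definition Imax1 {m n} (rho : 'M[C]_(m * n)) : \bar R :=
  ereal_inf [set Dmax rho (ptrB rho *t sigma) | sigma in [set sigma : 'M[C]_n | state sigma]].
Definition Imax1_s {m n} (delta : R) (rho : 'M[C]_(m * n)) : \bar R :=
  ereal_inf [set Imax1 rho' | rho' in sball delta rho].

(* eigendecomposition: rho = U^* diag(lam) U with U unitary (the rows of U are
   the conjugates of an orthonormal eigenbasis of rho) *)
Definition eigdec {n} (rho U : 'M[C]_n) (lam : 'rV[R]_n) : Prop :=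
  U \is unitarymx /\ rho = adj U *m diag_mx (map_mx (fun x => x%:C) lam) *m U.

(* \tilde H_max^delta(A)_rho : log |supp rho'|, where rho' is rho with its
   smallest eigenvalues summing to at most delta set to zero *)
Definition chosen_eig {n} (rho : 'M[C]_n) : 'M[C]_n * 'rV[R]_n :=
  xget (0, 0) [set p | eigdec rho p.1 p.2].

Definition trunc_state {n} (delta : R) (rho : 'M[C]_n) : 'M[C]_n :=
  let U := (chosen_eig rho).1 in
  let lam := (chosen_eig rho).2 in
  let s := sort (fun i j : 'I_n => lam 0 i <= lam 0 j) (enum 'I_n) in
  (* largest number of smallest eigenvalues whose sum is at most delta *)
  let mm := \big[maxn/0%N]_(j < n.+1 | \sum_(i <- take j s) lam 0 i <= delta) (j : nat) in
  let zeroed := take mm s in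
  let lam' := \row_i (if i \in zeroed then 0 else lam 0 i) in
  adj U *m diag_mx (map_mx (fun x => x%:C) lam') *m U.

Definition Hmaxt {n} (delta : R) (rho : 'M[C]_n) : \bar R :=
  let r := \rank (trunc_state delta rho) in
  if r == 0%N then -oo%E else ((log2 r%:R)%:E)%E.

(* transpose of Lam in the eigenbasis of rho given by U *)
Definition trE {n} (U L : 'M[C]_n) : 'M[C]_n := adj U *m (U *m L *m adj U)^T *m U.

Definition PX {n k} (rho : 'M[C]_n) (Lam : 'I_k -> 'M[C]_n) (x : 'I_k) : R :=
  trR (Lam x *m rho).

Definition rhoxR {n k} (rho U : 'M[C]_n) (Lam : 'I_k -> 'M[C]_n) (x : 'I_k)
  : 'M[C]_n :=
  ((PX rho Lam x)^-1)%:C *: (sqrtm rho *m trE U (Lam x) *m sqrtm rho).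

Definition sigmaXR {n k} (rho U : 'M[C]_n) (Lam : 'I_k -> 'M[C]_n)
  : 'M[C]_(k * n) :=
  \sum_(x < k) (delta_mx x x *t ((PX rho Lam x)%:C *: rhoxR rho U Lam x)).

End Quantum.

(* Main.v *)
Require Import Defs.
From HB Require Import structures.
From mathcomp Require Import all_boot all_order all_algebra.
From mathcomp Require Import sesquilinear spectral.
From mathcomp Require Import complex mxtens.
From mathcomp Require Import boolp classical_sets reals ereal exp.
From mathcomp Require Import ring lra.
Import Order.TTheory GRing.Theory Num.Theory Num.Def.
Local Open Scope ring_scope.
Set Implicit Arguments.
Unset Strict Implicit.
Unset Printing Implicit Defensive.


Section Mx.
Variable R : realType.
Local Notation C := (R[i]).

Lemma adjE m n (A : 'M[C]_(m,n)) i j : adj A i j = (A j i)^*.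
Proof. by rewrite /adj !mxE. Qed.

Lemma adjK m n (A : 'M[C]_(m,n)) : adj (adj A) = A.
Proof. by apply/matrixP => i j; rewrite !adjE conjCK. Qed.

Lemma adj_mul m n p (A : 'M[C]_(m,n)) (B : 'M[C]_(n,p)) : adj (A *m B) = adj B *m adj A.
Proof. by rewrite /adj trmx_mul map_mxM. Qed.

Lemma adjD m n (A B : 'M[C]_(m,n)) : adj (A + B) = adj A + adj B.
Proof. by apply/matrixP => i j; rewrite !mxE rmorphD. Qed.

Lemma adjN m n (A : 'M[C]_(m,n)) : adj (- A) = - adj A.
Proof. by apply/matrixP => i j; rewrite !mxE rmorphN. Qed.

Lemma adjB m n (A B : 'M[C]_(m,n)) : adj (A - B) = adj A - adj B.
Proof. by rewrite adjD adjN. Qed.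

Lemma adj0 m n : adj (0 : 'M[C]_(m,n)) = 0.
Proof. by apply/matrixP => i j; rewrite !mxE rmorph0. Qed.

Lemma adjZ m n (a : C) (A : 'M[C]_(m,n)) : adj (a *: A) = a^* *: adj A.
Proof. by apply/matrixP => i j; rewrite !mxE rmorphM. Qed.

Lemma adj_scalar n (a : C) : adj (a%:M : 'M[C]_n) = (a^*)%:M.
Proof. by apply/matrixP => i j; rewrite !mxE eq_sym; case: eqP => _; rewrite ?mulr1n ?mulr0n ?rmorph0. Qed.

Lemma adj1 n : adj (1%:M : 'M[C]_n) = 1%:M.
Proof. by rewrite adj_scalar conjC1. Qed.

Lemma adj_sum m n I (r : seq I) (P : pred I) (F : I -> 'M[C]_(m,n)) :
  adj (\sum_(i <- r | P i) F i) = \sum_(i <- r | P i) adj (F i).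
Proof.
exact: (big_morph _ (@adjD m n) (@adj0 m n)).
Qed.

Lemma adj_diag n (a : 'rV[C]_n) : adj (diag_mx a) = diag_mx (map_mx conjC a).
Proof.
apply/matrixP => i j; rewrite !mxE eq_sym; case: eqP => [->|_]; by rewrite ?mulr1n ?mulr0n ?rmorph0.
Qed.

Lemma adj_tens m n p q (A : 'M[C]_(m,n)) (B : 'M[C]_(p,q)) : adj (A *t B) = adj A *t adj B.
Proof. by apply/matrixP => i j; rewrite !mxE rmorphM. Qed.

Lemma adj_delta n (i j : 'I_n) : adj (delta_mx i j : 'M[C]_n) = delta_mx j i.
Proof.
apply/matrixP => a b; rewrite !mxE.
by case: (a == j); case: (b == i); rewrite /= ?mulr1n ?mulr0n ?rmorph0 ?rmorph1.
Qed.


Lemma psd_herm n (A : 'M[C]_n) : psdmx A -> adj A = A.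
Proof. by case. Qed.

Lemma quad_adj n m (v : 'rV[C]_m) (X : 'M[C]_(m,n)) (A : 'M[C]_n) :
  v *m (X *m A *m adj X) *m adj v = (v *m X) *m A *m adj (v *m X).
Proof. by rewrite adj_mul !mulmxA. Qed.

Lemma psd_congr m n (X : 'M[C]_(m,n)) (A : 'M[C]_n) :
  psdmx A -> psdmx (X *m A *m adj X).
Proof.
case=> hA pA; split; last by move=> v; rewrite quad_adj.
by rewrite !adj_mul adjK hA mulmxA.
Qed.

Lemma rv_norm_ge0 n (w : 'rV[C]_n) : 0 <= (w *m adj w) 0 0.
Proof. rewrite !mxE; apply: sumr_ge0 => j _; rewrite adjE; exact: mul_conjC_ge0. Qed.

Lemma rv_norm_eq0 n (w : 'rV[C]_n) : (w *m adj w) 0 0 = 0 -> w = 0.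
Proof.
rewrite !mxE => h; apply/rowP => j; rewrite mxE.
have H0 : forall i, predT i -> 0 <= w 0 i * adj w i 0.
  by move=> i _; rewrite adjE mul_conjC_ge0.
have := @psumr_eq0P _ _ _ _ H0 h j isT.
by rewrite adjE => /eqP; rewrite mul_conjC_eq0 => /eqP ->.
Qed.

Lemma psd1 n : psdmx (1%:M : 'M[C]_n).
Proof. by split; [exact: adj1 | move=> v; rewrite mulmx1 rv_norm_ge0]. Qed.

Lemma psd_mul_adj m n (X : 'M[C]_(m,n)) : psdmx (X *m adj X).
Proof. by have := psd_congr X (psd1 n); rewrite mulmx1. Qed.

Lemma psd0 n : psdmx (0 : 'M[C]_n).
Proof. by split; [exact: adj0 | move=> v; rewrite mulmx0 mul0mx mxE]. Qed.

Lemma psd_add n (A B : 'M[C]_n) : psdmx A -> psdmx B -> psdmx (A + B).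
Proof.
case=> hA pA [hB pB]; split; first by rewrite adjD hA hB.
by move=> v; rewrite mulmxDr mulmxDl mxE addr_ge0.
Qed.

Lemma psd_sum n I (r : seq I) (P : pred I) (F : I -> 'M[C]_n) :
  (forall i, P i -> psdmx (F i)) -> psdmx (\sum_(i <- r | P i) F i).
Proof.
move=> h; elim/big_rec: _ => [|i x Pi px]; first exact: psd0.
exact: psd_add (h _ Pi) px.
Qed.

Lemma ge0_conj (c : C) : 0 <= c -> c^* = c.
Proof. by move=> c0; apply: conj_Creal; apply: ger0_real. Qed.

Lemma psd_scale n (c : C) (A : 'M[C]_n) : 0 <= c -> psdmx A -> psdmx (c *: A).
Proof.
move=> c0 [hA pA]; split; first by rewrite adjZ hA ge0_conj.
by move=> v; rewrite -scalemxAr -scalemxAl mxE mulr_ge0.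
Qed.

Lemma rowquad m n (X : 'M[C]_(m,n)) (A : 'M[C]_n) j :
  (X *m A *m adj X) j j = (row j X *m A *m adj (row j X)) 0 0.
Proof.
rewrite !mxE; apply: eq_bigr => k _; rewrite !mxE; congr (_ * _).
by apply: eq_bigr => l _; rewrite !mxE.
Qed.

Lemma diag_quad n (w a : 'rV[C]_n) :
  (w *m diag_mx a *m adj w) 0 0 = \sum_j a 0 j * (w 0 j * (w 0 j)^*).
Proof.
rewrite mul_mx_diag !mxE; apply: eq_bigr => j _; rewrite !mxE.
by rewrite mulrAC mulrC.
Qed.

Lemma psd_diag n (a : 'rV[C]_n) : (forall j, 0 <= a 0 j) -> psdmx (diag_mx a).
Proof.
move=> a0; split.
  by rewrite adj_diag; congr diag_mx; apply/rowP => j; rewrite !mxE ge0_conj.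
move=> v; rewrite diag_quad; apply: sumr_ge0 => j _.
by rewrite mulr_ge0 // mul_conjC_ge0.
Qed.

Lemma herm_spectral n (A : 'M[C]_n) : adj A = A ->
  exists V : 'M[C]_n, exists a : 'rV[C]_n,
    [/\ V *m adj V = 1%:M, adj V *m V = 1%:M, A = adj V *m diag_mx a *m V &
      forall j, a 0 j = (row j V *m A *m adj (row j V)) 0 0].
Proof.
move=> hA.
have nA : A \is normalmx.
  by apply/normalmxP; change (A *m adj A = adj A *m A); rewrite hA.
have eA := orthomx_spectralP nA.
have uP := spectral_unitarymx A.
set V := spectralmx A in eA uP; set a := spectral_diag A in eA.
have VV : V *m adj V = 1%:M by exact/unitarymxP.
have VV' : adj V *m V = 1%:M by exact: mulmx1C.
have eA' : A = adj V *m diag_mx a *m V.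
  by rewrite {1}eA invmx_unitary.
exists V, a; split => // j.
rewrite -rowquad {1}eA' !mulmxA VV mul1mx -mulmxA VV mulmx1.
by rewrite mxE eqxx mulr1n.
Qed.

End Mx.


Section Mx2.
Variable R : realType.
Local Notation C := (R[i]).

Lemma entryD m n (A B : 'M[C]_(m,n)) i j : (A + B) i j = A i j + B i j.
Proof. by rewrite mxE. Qed.
Lemma entryZ m n (a : C) (A : 'M[C]_(m,n)) i j : (a *: A) i j = a * A i j.
Proof. by rewrite mxE. Qed.
Lemma entry0 m n i j : (0 : 'M[C]_(m,n)) i j = 0.
Proof. by rewrite mxE. Qed.

Lemma psd_spectral n (A : 'M[C]_n) : psdmx A ->
  exists V : 'M[C]_n, exists a : 'rV[C]_n,
    [/\ V *m adj V = 1%:M, adj V *m V = 1%:M, A = adj V *m diag_mx a *m V &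
      forall j, 0 <= a 0 j].
Proof.
move=> pA; have [V [a [VV VV' eA ha]]] := herm_spectral (psd_herm pA).
by exists V, a; split => // j; rewrite ha; exact: pA.2.
Qed.

Lemma uconjM n (V D E : 'M[C]_n) : V *m adj V = 1%:M ->
  (adj V *m D *m V) *m (adj V *m E *m V) = adj V *m (D *m E) *m V.
Proof.
move=> VV; rewrite !mulmxA.
by rewrite -[adj V *m D *m V *m adj V]mulmxA VV mulmx1.
Qed.

Lemma psd_sqrt_ex n (A : 'M[C]_n) : psdmx A -> exists B, psdmx B /\ B *m B = A.
Proof.
move=> pA; have [V [a [VV VV' eA a0]]] := psd_spectral pA.
set d := map_mx sqrtC a.
exists (adj V *m diag_mx d *m V); split.
  have := psd_congr (adj V) (psd_diag (a := d) _); rewrite adjK; apply.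
  by move=> j; rewrite mxE sqrtC_ge0.
rewrite uconjM // mulmx_diag eA.
have -> : \row_(j < n) (d 0 j * d 0 j) = a by apply/rowP => j; rewrite !mxE -expr2 sqrtCK.
by [].
Qed.

Lemma psd_quad0 n (A : 'M[C]_n) (v : 'rV[C]_n) : psdmx A -> (v *m A *m adj v) 0 0 = 0 -> v *m A = 0.
Proof.
move=> pA h; have [S [pS eS]] := psd_sqrt_ex pA.
have e : (v *m S) *m adj (v *m S) = v *m A *m adj v.
  by rewrite adj_mul (psd_herm pS) !mulmxA -eS mulmxA.
have vS0 : v *m S = 0 by apply: rv_norm_eq0; rewrite e.
by rewrite -eS mulmxA vS0 mul0mx.
Qed.

Lemma quad_real n (D : 'M[C]_n) (v : 'rV[C]_n) : adj D = D ->
  ((v *m D *m adj v) 0 0)^* = (v *m D *m adj v) 0 0.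
Proof.
move=> hD; rewrite -adjE.
by rewrite !adj_mul adjK hD mulmxA.
Qed.

Lemma psd_sqrt_uniq n (B B' : 'M[C]_n) :
  psdmx B -> psdmx B' -> B *m B = B' *m B' -> B = B'.
Proof.
move=> pB pB' e.
set D := B - B'.
have hD : adj D = D by rewrite adjB !psd_herm.
have [V [mu [VV VV' eD hmu]]] := herm_spectral hD.
suff mu0 : mu = 0.
  apply/eqP; rewrite -subr_eq0 -/D eD mu0 raddf0 mulmx0 mul0mx //.
apply/rowP => j; rewrite mxE.
set v := row j V.
have VD : V *m D = diag_mx mu *m V.
  by rewrite {1}eD !mulmxA VV mul1mx.
have vD : v *m D = mu 0 j *: v.
  by rewrite /v -row_mul VD row_mul row_diag_mx -scalemxAl -rowE.
have mur : (mu 0 j)^* = mu 0 j by rewrite hmu quad_real.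
have Dv : D *m adj v = mu 0 j *: adj v.
  by rewrite -hD -adj_mul vD adjZ mur.
have key : D *m B + B' *m D = 0.
  by rewrite /D mulmxBl mulmxBr e addrA subrK subrr.
have h0 : mu 0 j * ((v *m B *m adj v) 0 0 + (v *m B' *m adj v) 0 0) = 0.
  have := congr1 (fun M => (v *m M *m adj v) 0 0) key.
  rewrite /= mulmxDr mulmxDl mulmx0 mul0mx entryD entry0 => <-.
  rewrite mulrDr; congr (_ + _).
    by rewrite !mulmxA vD -scalemxAl -scalemxAl entryZ.
  by rewrite -!mulmxA Dv -!scalemxAr entryZ !mulmxA.
move/eqP: h0; rewrite mulf_eq0 => /orP[/eqP //|].
rewrite paddr_eq0 ?pB.2 ?pB'.2 // => /andP[/eqP hB /eqP hB'].
have vB := psd_quad0 pB hB; have vB' := psd_quad0 pB' hB'.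
have : mu 0 j *: v = 0 by rewrite -vD /D mulmxBr vB vB' subrr.
move/eqP; rewrite scalemx_eq0 => /orP[/eqP //|/eqP v0].
have : (v *m 1%:M *m adj v) 0 0 = 1 by rewrite -rowquad mulmx1 VV mxE eqxx.
by rewrite v0 !mul0mx entry0 => /esym/eqP; rewrite oner_eq0.
Qed.

Lemma sqrtm_spec n (A : 'M[C]_n) : psdmx A ->
  psdmx (sqrtm A) /\ sqrtm A *m sqrtm A = A.
Proof.
move=> pA; rewrite /sqrtm.
have := @xgetPex _ 0 [set B : 'M[C]_n | psdmx B /\ B *m B = A].
by apply; exact: psd_sqrt_ex.
Qed.

Lemma sqrtm_uniq n (A B : 'M[C]_n) : psdmx B -> B *m B = A -> sqrtm A = B.
Proof.
move=> pB eB; have pA : psdmx A by rewrite -eB; have := psd_mul_adj B; rewrite psd_herm.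
have [p1 p2] := sqrtm_spec pA.
by apply: psd_sqrt_uniq => //; rewrite p2.
Qed.

End Mx2.


Section Mx3.
Variable R : realType.
Local Notation C := (R[i]).

Lemma entryB m n (A B : 'M[C]_(m,n)) i j : (A - B) i j = A i j - B i j.
Proof. by rewrite !mxE. Qed.

Lemma ge0_C (z : C) : 0 <= z -> z = ((complex.Re z)%:C)%C.
Proof. by case: z => a b; rewrite lecE /= => /andP[/eqP -> _]. Qed.

Lemma psd_diag_ge0 n (A : 'M[C]_n) j : psdmx A -> 0 <= A j j.
Proof.
move=> pA; have := rowquad 1%:M A j; rewrite mul1mx adj1 mulmx1 => ->.
exact: pA.2.
Qed.

Lemma psd_tr_ge0 n (A : 'M[C]_n) : psdmx A -> 0 <= \tr A.
Proof. by move=> pA; rewrite /mxtrace sumr_ge0 // => j _; apply: psd_diag_ge0. Qed.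

Lemma tr_uconj n (V D : 'M[C]_n) : V *m adj V = 1%:M -> \tr (adj V *m D *m V) = \tr D.
Proof. by move=> VV; rewrite mxtrace_mulC mulmxA VV mul1mx. Qed.

Lemma psd_tr0 n (A : 'M[C]_n) : psdmx A -> \tr A = 0 -> A = 0.
Proof.
move=> pA; have [V [a [VV VV' eA a0]]] := psd_spectral pA.
rewrite {1}eA tr_uconj // mxtrace_diag => h.
have a00 : a = 0.
  apply/rowP => j; rewrite mxE.
  have H0 : forall i, predT i -> 0 <= a 0 i by move=> i _; apply: a0.
  exact: (@psumr_eq0P _ _ _ _ H0 h j isT).
by rewrite eA a00 raddf0 mulmx0 mul0mx.
Qed.

Lemma psd_le_tr n (M : 'M[C]_n) : psdmx M -> psdmx ((\tr M) *: 1%:M - M).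
Proof.
move=> pM; have [V [a [VV VV' eA a0]]] := psd_spectral pM.
have trge0 := psd_tr_ge0 pM.
split; first by rewrite adjB adjZ adj1 ge0_conj // psd_herm.
move=> v; rewrite mulmxBr mulmxBl entryB -scalemxAr -scalemxAl mulmx1 entryZ subr_ge0.
have e1 : v *m M *m adj v = (v *m adj V) *m diag_mx a *m adj (v *m adj V).
  by rewrite adj_mul adjK eA !mulmxA.
have e2 : v *m adj v = (v *m adj V) *m adj (v *m adj V).
  by rewrite adj_mul adjK !mulmxA -(mulmxA v (adj V) V) VV' mulmx1.
have e3 : \tr M = \sum_j a 0 j by rewrite {1}eA tr_uconj // mxtrace_diag.
rewrite e1 e2 e3 diag_quad; set w := v *m adj V.
rewrite mulr_suml; apply: ler_sum => j _; apply: ler_wpM2l; first exact: a0.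
rewrite [X in _ <= X]mxE (bigD1 j) //= adjE lerDl; apply: sumr_ge0 => k _.
by rewrite adjE mul_conjC_ge0.
Qed.

Lemma entryN m n (A : 'M[C]_(m,n)) i j : (- A) i j = - A i j.
Proof. by rewrite mxE. Qed.


Lemma tensmxDl m n p q (A B : 'M[C]_(m,n)) (N : 'M[C]_(p,q)) :
  (A + B) *t N = A *t N + B *t N.
Proof. by apply/matrixP => i j; rewrite !mxE mulrDl. Qed.

Lemma tensmxDr m n p q (N : 'M[C]_(m,n)) (A B : 'M[C]_(p,q)) :
  N *t (A + B) = N *t A + N *t B.
Proof. by apply/matrixP => i j; rewrite !mxE mulrDr. Qed.

Lemma tensmxNr m n p q (N : 'M[C]_(m,n)) (A : 'M[C]_(p,q)) :
  N *t (- A) = - (N *t A).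
Proof. by apply/matrixP => i j; rewrite !mxE mulrN. Qed.

Lemma tensmxZl m n p q (a : C) (A : 'M[C]_(m,n)) (N : 'M[C]_(p,q)) :
  (a *: A) *t N = a *: (A *t N).
Proof. by apply/matrixP => i j; rewrite !mxE mulrA. Qed.

Lemma tensmxZr m n p q (a : C) (A : 'M[C]_(m,n)) (N : 'M[C]_(p,q)) :
  A *t (a *: N) = a *: (A *t N).
Proof. by apply/matrixP => i j; rewrite !mxE mulrCA. Qed.

Lemma tensmx_suml m n p q k (F : 'I_k -> 'M[C]_(m,n)) (N : 'M[C]_(p,q)) :
  (\sum_(x < k) F x) *t N = \sum_(x < k) (F x *t N).
Proof.
elim/big_rec2: _ => [|x M1 M2 _ <-]; first by rewrite tens0mx.
by rewrite tensmxDl.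
Qed.

Lemma tensmx_sumr m n p q k (F : 'I_k -> 'M[C]_(m,n)) (N : 'M[C]_(p,q)) :
  N *t (\sum_(x < k) F x) = \sum_(x < k) (N *t F x).
Proof.
elim/big_rec2: _ => [|x M1 M2 _ <-]; first by rewrite tensmx0.
by rewrite tensmxDr.
Qed.

Lemma psd_tens m n (A : 'M[C]_m) (B : 'M[C]_n) : psdmx A -> psdmx B -> psdmx (A *t B).
Proof.
move=> pA pB; have [S [pS eS]] := psd_sqrt_ex pA; have [T [pT eT]] := psd_sqrt_ex pB.
have -> : A *t B = (S *t T) *m adj (S *t T).
  by rewrite adj_tens !psd_herm // tensmx_mul eS eT.
exact: psd_mul_adj.
Qed.

Lemma tr_tens m n (A : 'M[C]_m) (B : 'M[C]_n) : \tr (A *t B) = \tr A * \tr B.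
Proof. by rewrite /mxtrace mulr_sum; apply: eq_bigr => k _; rewrite mxE. Qed.

Lemma ptrB_tens m n (A : 'M[C]_m) (N : 'M[C]_n) : ptrB (A *t N) = \tr N *: A.
Proof.
apply/matrixP => i k; rewrite mxE entryZ.
under eq_bigr => j _ do rewrite tensmxE.
by rewrite -mulr_sumr mulrC.
Qed.

Lemma ptrA_tens m n (A : 'M[C]_m) (N : 'M[C]_n) : ptrA (A *t N) = \tr A *: N.
Proof.
apply/matrixP => j l; rewrite mxE entryZ.
under eq_bigr => i _ do rewrite tensmxE.
by rewrite -mulr_suml.
Qed.

Lemma ptrBD m n (A B : 'M[C]_(m * n)) : ptrB A + ptrB B = ptrB (A + B).
Proof. by apply/matrixP => i k; rewrite !mxE -big_split; apply: eq_bigr => j _; rewrite mxE. Qed.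

Lemma ptrB0 m n : ptrB (0 : 'M[C]_(m * n)) = 0.
Proof. by apply/matrixP => i k; rewrite !mxE big1 // => j _; rewrite mxE. Qed.

Lemma ptrAD m n (A B : 'M[C]_(m * n)) : ptrA A + ptrA B = ptrA (A + B).
Proof. by apply/matrixP => i k; rewrite !mxE -big_split; apply: eq_bigr => j _; rewrite mxE. Qed.

Lemma ptrA0 m n : ptrA (0 : 'M[C]_(m * n)) = 0.
Proof. by apply/matrixP => i k; rewrite !mxE big1 // => j _; rewrite mxE. Qed.

Lemma ptrB_sum m n k (F : 'I_k -> 'M[C]_(m * n)) :
  ptrB (\sum_(x < k) F x) = \sum_(x < k) ptrB (F x).
Proof.
elim/big_rec2: _ => [|x M1 M2 _ <-]; first by rewrite ptrB0.
by rewrite -ptrBD.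
Qed.

Lemma ptrA_sum m n k (F : 'I_k -> 'M[C]_(m * n)) :
  ptrA (\sum_(x < k) F x) = \sum_(x < k) ptrA (F x).
Proof.
elim/big_rec2: _ => [|x M1 M2 _ <-]; first by rewrite ptrA0.
by rewrite -ptrAD.
Qed.

Lemma adj_delta_r m n (i : 'I_m) (j : 'I_n) : adj (delta_mx i j : 'M[C]_(m,n)) = delta_mx j i.
Proof.
apply/matrixP => a b; rewrite !mxE.
by case: (a == j); case: (b == i); rewrite /= ?mulr1n ?mulr0n ?rmorph0 ?rmorph1.
Qed.

Lemma psd_delta k (x : 'I_k) : psdmx (delta_mx x x : 'M[C]_k).
Proof.
have := psd_mul_adj (delta_mx x (0 : 'I_1) : 'M[C]_(k,1)).
by rewrite adj_delta_r mul_delta_mx.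
Qed.

Lemma tr_delta k (x : 'I_k) : \tr (delta_mx x x : 'M[C]_k) = 1.
Proof.
rewrite /mxtrace (bigD1 x) //= mxE !eqxx /= big1 ?addr0 // => j /negPf hj.
by rewrite mxE hj.
Qed.

Lemma Dmax_le m (A B : 'M[C]_m) (a l : R) :
  psdmx B -> psdmx (a%:C%C *: B - A) -> a <= 2 `^ l -> (Dmax A B <= l%:E)%E.
Proof.
move=> pB pA al; apply: ereal_inf_lbound; exists l; last by [].
rewrite /=.
change (psdmx ((2 `^ l)%:C%C *: B - A)).
have -> : (2 `^ l)%:C%C *: B - A = ((2 `^ l - a)%:C%C *: B) + (a%:C%C *: B - A).
  by rewrite addrA -scalerDl rmorphB subrK.
apply: psd_add => //; apply: psd_scale => //.
by rewrite ler0c subr_ge0.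
Qed.

End Mx3.


Section P1.
Variable R : realType.
Local Notation C := (R[i]).

Lemma psd_trmx n (M : 'M[C]_n) : psdmx M -> psdmx (M^T).
Proof.
move=> [hM pM]; split.
  by apply/matrixP => i j; rewrite adjE mxE -adjE hM mxE.
move=> v; set w := map_mx conjC v.
have -> : (v *m M^T *m adj v) 0 0 = (w *m M *m adj w) 0 0.
  have e : (v *m M^T *m adj v) 0 0 = ((v *m M^T *m adj v)^T) 0 0 by rewrite [RHS]mxE.
  rewrite e !trmx_mul trmxK.
  have -> : (adj v)^T = w by apply/matrixP => i j; rewrite !mxE.
  have -> : v^T = adj w by apply/matrixP => i j; rewrite !mxE conjCK.
  by rewrite mulmxA.
exact: pM.
Qed.

Lemma unitary_adj n (U : 'M[C]_n) : U \is unitarymx -> U *m adj U = 1%:M /\ adj U *m U = 1%:M.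
Proof. by move=> /unitarymxP h; split => //; exact: mulmx1C. Qed.

Lemma psd_trE n (U L : 'M[C]_n) : U \is unitarymx -> psdmx L -> psdmx (trE U L).
Proof.
move=> uU pL; rewrite /trE.
have := psd_congr (adj U) (psd_trmx (psd_congr U pL)); rewrite adjK; apply.
Qed.

Lemma trE_add n (U A B : 'M[C]_n) : trE U (A + B) = trE U A + trE U B.
Proof. by rewrite /trE mulmxDr mulmxDl linearD /= mulmxDr mulmxDl. Qed.

Lemma trE0 n (U : 'M[C]_n) : trE U 0 = 0.
Proof. by rewrite /trE mulmx0 mul0mx trmx0 mulmx0 mul0mx. Qed.

Lemma trE_sum n k (U : 'M[C]_n) (F : 'I_k -> 'M[C]_n) :
  trE U (\sum_(x < k) F x) = \sum_(x < k) trE U (F x).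
Proof.
elim/big_rec2: _ => [|x M1 M2 _ <-]; first by rewrite trE0.
by rewrite trE_add.
Qed.

Lemma trE1 n (U : 'M[C]_n) : U \is unitarymx -> trE U 1%:M = 1%:M.
Proof.
move=> /unitary_adj [h1 h2]; rewrite /trE mulmx1 h1 trmx1 mulmx1 h2 //.
Qed.

End P1.


Section P2.
Variable R : realType.
Local Notation C := (R[i]).

Definition Bx n k (rho U : 'M[C]_n) (Lam : 'I_k -> 'M[C]_n) x :=
  sqrtm rho *m trE U (Lam x) *m sqrtm rho.

Variables (n k : nat) (rho U : 'M[C]_n) (lam : 'rV[R]_n) (Lam : 'I_k -> 'M[C]_n).
Hypotheses (srho : state rho) (erho : eigdec rho U lam) (pLam : povm Lam).

Let prho : psdmx rho := srho.1.
Let uU : U \is unitarymx := erho.1.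
Let S := sqrtm rho.
Let pS : psdmx S := (sqrtm_spec prho).1.
Let SS : S *m S = rho := (sqrtm_spec prho).2.

Lemma Bx_psd x : psdmx (Bx rho U Lam x).
Proof.
rewrite /Bx -/S -{2}(psd_herm pS); apply: psd_congr.
exact: psd_trE uU (pLam.1 x).
Qed.

Lemma Bx_sum : \sum_(x < k) Bx rho U Lam x = rho.
Proof.
rewrite /Bx -mulmx_suml -mulmx_sumr -trE_sum pLam.2 trE1 //.
by rewrite mulmx1 -/S SS.
Qed.

Lemma uconjM' (V D E : 'M[C]_n) : V *m adj V = 1%:M ->
  (adj V *m D *m V) *m (adj V *m E *m V) = adj V *m (D *m E) *m V.
Proof. exact: uconjM. Qed.

Lemma Bx_tr x : \tr (Bx rho U Lam x) = \tr (Lam x *m rho).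
Proof.
have [h1 h2] := unitary_adj uU.
rewrite /Bx -/S -mulmxA mxtrace_mulC -mulmxA SS.
rewrite [X in trE U (Lam x) *m X]erho.2 /trE uconjM' // tr_uconj //.
set D := diag_mx _; set M := U *m Lam x *m adj U.
rewrite -mxtrace_tr trmx_mul trmxK tr_diag_mx /M.
rewrite !mulmxA mxtrace_mulC !mulmxA -[adj U *m D *m U]erho.2.
by rewrite mxtrace_mulC.
Qed.


Lemma PX_tr x : PX rho Lam x = complex.Re (\tr (Bx rho U Lam x)).
Proof. by rewrite Bx_tr. Qed.

Lemma Bx_tr_real x : \tr (Bx rho U Lam x) = ((PX rho Lam x)%:C)%C.
Proof. rewrite PX_tr -ge0_C //; apply: psd_tr_ge0; exact: Bx_psd. Qed.

Lemma sigma_eq : sigmaXR rho U Lam = \sum_(x < k) (delta_mx x x *t Bx rho U Lam x).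
Proof.
rewrite /sigmaXR; apply: eq_bigr => x _; congr (_ *t _).
rewrite /rhoxR scalerA -rmorphM -/(Bx rho U Lam x).
case: (eqVneq (PX rho Lam x) 0) => [h|h].
  have B0 : Bx rho U Lam x = 0 by apply: psd_tr0; [exact: Bx_psd | rewrite Bx_tr_real h].
  by rewrite B0 scaler0.
by rewrite mulfV // rmorph1 scale1r.
Qed.

Lemma tr_rho : \tr rho = 1.
Proof. exact: srho.2. Qed.

Lemma tr_sigma : \tr (sigmaXR rho U Lam) = 1.
Proof.
rewrite sigma_eq raddf_sum /=.
under eq_bigr => x _ do rewrite tr_tens tr_delta mul1r.
by rewrite -raddf_sum /= Bx_sum tr_rho.
Qed.

Lemma psd_sigma : psdmx (sigmaXR rho U Lam).
Proof.
rewrite sigma_eq; apply: psd_sum => x _; apply: psd_tens; first exact: psd_delta.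
exact: Bx_psd.
Qed.

End P2.


Section P3.
Variable R : realType.
Local Notation C := (R[i]).

Lemma count_le_rank n (v : 'rV[C]_n) : (#|[set j | (v 0 j != 0)%R]| <= \rank (diag_mx v))%N.
Proof.
set K := [set j | v 0 j != 0]; set c := #|K|.
pose X : 'M[C]_(c, n) := \matrix_(a, j) ((j == enum_val a)%:R).
pose Y : 'M[C]_(n, c) := \matrix_(j, b) ((j == enum_val b)%:R * (v 0 j)^-1).
have e : X *m diag_mx v *m Y = 1%:M.
  apply/matrixP => a b; rewrite mul_mx_diag !mxE (bigD1 (enum_val a)) //= !mxE eqxx.
  rewrite big1 ?addr0; last by move=> j /negPf hj; rewrite !mxE hj mul0r mul0r.
  have va : v 0 (enum_val a) != 0 by have := enum_valP a; rewrite inE.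
  rewrite mul1r (inj_eq enum_val_inj); case: (a == b); rewrite /= ?mul1r ?mul0r ?mulr0 //.
  by rewrite mulfV.
have : (c <= \rank (X *m diag_mx v *m Y))%N by rewrite e mxrank1.
move=> h; apply: (leq_trans h); apply: (leq_trans (mxrankM_maxl _ _)).
exact: mxrankM_maxr.
Qed.

Lemma rank_uconj n (V X : 'M[C]_n) : V *m adj V = 1%:M ->
  (\rank X <= \rank (adj V *m X *m V))%N.
Proof.
move=> VV; have e : X = V *m (adj V *m X *m V) *m adj V.
  by rewrite !mulmxA VV mul1mx -mulmxA VV mulmx1.
rewrite {1}e.
apply: (leq_trans (mxrankM_maxl _ _)); exact: mxrankM_maxr.
Qed.


Variables (n : nat) (rho U : 'M[C]_n) (lam : 'rV[R]_n).
Hypotheses (srho : state rho) (erho : eigdec rho U lam).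

Lemma chosen_spec : eigdec rho (chosen_eig rho).1 (chosen_eig rho).2.
Proof.
rewrite /chosen_eig.
have := @xgetPex _ (0, 0) [set p : 'M[C]_n * 'rV[R]_n | eigdec rho p.1 p.2].
by apply; exists (U, lam).
Qed.

Local Notation U' := (chosen_eig rho).1.
Local Notation l := (chosen_eig rho).2.

Lemma chosen_unit : U' *m adj U' = 1%:M /\ adj U' *m U' = 1%:M.
Proof. exact: unitary_adj (chosen_spec.1). Qed.

Lemma eig_ge0 V a : eigdec rho V a -> forall j, 0 <= a 0 j.
Proof.
move=> [uV eV] j; have [h1 h2] := unitary_adj uV.
have e : (V *m rho *m adj V) j j = ((a 0 j)%:C)%C.
  rewrite eV !mulmxA h1 mul1mx -mulmxA h1 mulmx1.
  by rewrite !mxE eqxx mulr1n.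
rewrite -ler0c -e rowquad; exact: srho.1.2.
Qed.

Lemma eig_sum V a : eigdec rho V a -> \sum_j a 0 j = 1.
Proof.
move=> [uV eV]; have [h1 h2] := unitary_adj uV.
apply: (@complexI R); rewrite rmorph_sum /= -[RHS]srho.2 eV tr_uconj //.
by rewrite mxtrace_diag; apply: eq_bigr => j _; rewrite mxE.
Qed.

Lemma l_ge0 j : 0 <= l 0 j.
Proof. exact: eig_ge0 chosen_spec j. Qed.

Lemma l_sum : \sum_j l 0 j = 1.
Proof. exact: eig_sum chosen_spec. Qed.

Lemma trunc_spec δ : 0 <= δ -> exists z : seq 'I_n,
  [/\ uniq z, \sum_(i <- z) l 0 i <= δ &
      trunc_state δ rho = adj U' *m diag_mx (map_mx (fun x => (x%:C)%C)
          (\row_i (if i \in z then 0 else l 0 i))) *m U'].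
Proof.
move=> d0; rewrite /trunc_state /=.
set s := sort _ _.
set mm := \big[maxn/0%N]_(j < n.+1 | _) _.
exists (take mm s); split => //.
  by rewrite take_uniq // sort_uniq enum_uniq.
rewrite /mm (bigop.bigmax_eq_arg ord0); last by rewrite take0 big_nil.
by case: arg_maxnP => //=; rewrite take0 big_nil.
Qed.


Definition dd δ := \rank (trunc_state δ rho).

Lemma weight δ : 0 < δ < 1 ->
  (0 < dd δ)%N /\ \sum_j (if l 0 j < δ / (dd δ)%:R then l 0 j else 0) <= 2 * δ.
Proof.
move=> /andP[d0 d1].
have [z [uz zs et]] := trunc_spec (ltW d0).
set v := map_mx _ (\row_i _) in et.
have [h1 h2] := chosen_unit.
have cnt : (#|[set j | (v 0 j != 0)%R]| <= dd δ)%N.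
  rewrite /dd et; apply: (leq_trans (count_le_rank v)); exact: rank_uconj.
have vE : forall j, v 0 j = ((if j \in z then 0 else l 0 j)%:C)%C by move=> j; rewrite !mxE.
have gz : \sum_j (if j \in z then l 0 j else 0) = \sum_(i <- z) l 0 i.
  by rewrite [RHS]big_uniq // [RHS]big_mkcond.
have dpos : (0 < dd δ)%N.
  rewrite lt0n; apply/negP => /eqP dz.
  have c0 : #|[set j | (v 0 j != 0)%R]| = 0%N by move: cnt; rewrite dz leqn0 => /eqP.
  have : 1 <= δ.
    rewrite -l_sum; apply: (le_trans _ zs); rewrite -gz le_eqVlt; apply/orP; left; apply/eqP.
    apply: eq_bigr => j _; case: ifP => // jz.
    have : j \notin [set j | (v 0 j != 0)%R].
      apply/negP => jin.
      have : (0 < #|[set j | (v 0 j != 0)%R]|)%N by apply/card_gt0P; exists j.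
      by rewrite c0.
    by rewrite inE negbK vE jz => /eqP; case.
  by rewrite leNgt d1.
split => //.
set θ := δ / (dd δ)%:R.
have th0 : 0 <= θ by rewrite divr_ge0 // ltW.
apply: (le_trans (y := \sum_j ((if j \in z then l 0 j else 0) + (if (v 0 j != 0)%R then θ else 0)))).
  apply: ler_sum => j _.
  case: ifP => ljt; last first.
    by apply: addr_ge0; [case: ifP => _; rewrite ?l_ge0 | case: ifP].
  case: ifP => jz; first by rewrite lerDl; case: ifP.
  rewrite add0r vE jz; case: (eqVneq (l 0 j) 0) => [->|ln0]; first by case: ifP.
  rewrite ifT ?ltW //; apply: contra ln0 => /eqP; by case => ->.
have hs : \sum_j (if (v 0 j != 0)%R then θ else 0) = θ *+ #|[set j | (v 0 j != 0)%R]|.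
  by rewrite -sumr_const [RHS]big_mkcond; apply: eq_bigr => j _; rewrite inE.
rewrite big_split /= gz hs mulr2n mulrDl mul1r; apply: lerD => //.
apply: (le_trans (ler_wpMn2l th0 cnt)).
rewrite -mulr_natr /θ divfK //.
by rewrite pnatr_eq0 -lt0n.
Qed.

End P3.


Section P4.
Variable R : realType.
Local Notation C := (R[i]).

Lemma adjmul0 m n (Y : 'M[C]_(m,n)) : adj Y *m Y = 0 -> Y = 0.
Proof.
move=> h; suff h0 : adj Y = 0 by rewrite -[Y]adjK h0 adj0.
apply/row_matrixP => j; rewrite row0; apply: rv_norm_eq0.
have := rowquad (adj Y) 1%:M j; rewrite !mulmx1 adjK h => <-.
by rewrite mxE.
Qed.

Lemma idem_sand m (P B : 'M[C]_m) : P *m P = P -> P *m (P *m B *m P) *m P = P *m B *m P.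
Proof. by move=> h; rewrite !mulmxA h -!mulmxA h. Qed.

Variables (n k : nat) (rho U : 'M[C]_n) (lam : 'rV[R]_n) (Lam : 'I_k -> 'M[C]_n).
Hypotheses (srho : state rho) (erho : eigdec rho U lam) (pLam : povm Lam).
Variables (V : 'M[C]_n) (a : 'rV[R]_n) (θ : R).
Hypotheses (eV : eigdec rho V a) (th0 : 0 < θ).

Let VV := (unitary_adj eV.1).1.
Let VV' := (unitary_adj eV.1).2.

Definition ev : 'rV[C]_n := \row_(j < n) (((θ <= a 0 j)%R)%:R).
Definition Pi := adj V *m diag_mx ev *m V.
Definition tt := \sum_j (if θ <= a 0 j then a 0 j else 0).
Definition Mm := Pi *m rho *m Pi.

Lemma ev_ge0 j : 0 <= ev 0 j.
Proof. by rewrite mxE; case: (θ <= a 0 j). Qed.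

Lemma Pi_herm : adj Pi = Pi.
Proof.
rewrite /Pi !adj_mul adjK adj_diag mulmxA; congr (_ *m diag_mx _ *m _).
by apply/rowP => j; rewrite !mxE; case: (θ <= a 0 j); rewrite ?rmorph1 ?rmorph0.
Qed.

Lemma Pi_idem : Pi *m Pi = Pi.
Proof.
rewrite /Pi uconjM // mulmx_diag; congr (_ *m diag_mx _ *m _).
by apply/rowP => j; rewrite !mxE; case: (θ <= a 0 j); rewrite ?mulr1 ?mulr0.
Qed.

Lemma Pi_psd : psdmx Pi.
Proof.
have := psd_congr (adj V) (psd_diag ev_ge0); rewrite adjK; apply.
Qed.

Lemma Mm_eq : Mm = adj V *m diag_mx (\row_j ((if θ <= a 0 j then a 0 j else 0)%:C%C)) *m V.
Proof.
rewrite /Mm /Pi eV.2 uconjM // uconjM // !mulmx_diag; congr (_ *m diag_mx _ *m _).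
by apply/rowP => j; rewrite !mxE; case: (θ <= a 0 j); rewrite ?mulr1 ?mul1r ?mulr0 ?mul0r.
Qed.

Lemma tr_Mm : \tr Mm = tt%:C%C.
Proof.
rewrite Mm_eq tr_uconj // mxtrace_diag /tt rmorph_sum; apply: eq_bigr => j _.
by rewrite mxE.
Qed.

Lemma Mm_psd : psdmx Mm.
Proof. by rewrite /Mm -{2}Pi_herm; apply: psd_congr; exact: srho.1. Qed.

Lemma Mm_ge : psdmx (Mm - θ%:C%C *: Pi).
Proof.
have -> : Mm - θ%:C%C *: Pi = adj V *m diag_mx
   (\row_j ((if θ <= a 0 j then a 0 j - θ else 0)%:C%C)) *m V.
  rewrite Mm_eq /Pi scalemxAl scalemxAr -mulmxBl -mulmxBr; congr (_ *m _ *m _).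
  apply/matrixP => i j; rewrite !mxE; case: eqP => [->|_]; rewrite ?mulr1n ?mulr0n ?mulr0 ?subr0 //.
  by case: (θ <= a 0 j); rewrite ?mulr1 ?mulr0 ?subr0 // rmorphB.
have := psd_congr (adj V) (psd_diag (a := \row_j ((if θ <= a 0 j then a 0 j - θ else 0)%:C%C)) _).
rewrite adjK; apply => j; rewrite mxE ler0c.
by case: ifP => // h; rewrite subr_ge0.
Qed.

Lemma tt_w : 1 - tt = \sum_j (if a 0 j < θ then a 0 j else 0).
Proof.
rewrite -(eig_sum srho eV) /tt -sumrB; apply: eq_bigr => j _.
by rewrite ltNge; case: (θ <= a 0 j); rewrite /= ?subrr ?subr0.
Qed.

Lemma tt_ge0 : 0 <= tt.
Proof. by apply: sumr_ge0 => j _; case: ifP => // _; exact: (eig_ge0 srho eV). Qed.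

Lemma tt_le1 : tt <= 1.
Proof.
rewrite -subr_ge0 tt_w; apply: sumr_ge0 => j _; case: ifP => // _.
exact: (eig_ge0 srho eV).
Qed.


Definition Pt := (1%:M : 'M[C]_k) *t Pi.
Definition Ax x := Pi *m Bx rho U Lam x *m Pi.
Definition sig' := Pt *m sigmaXR rho U Lam *m Pt.

Lemma Pt_herm : adj Pt = Pt.
Proof. by rewrite /Pt adj_tens adj1 Pi_herm. Qed.

Lemma Pt_idem : Pt *m Pt = Pt.
Proof. by rewrite /Pt tensmx_mul mul1mx Pi_idem. Qed.

Lemma sig'_eq : sig' = \sum_(x < k) (delta_mx x x *t Ax x).
Proof.
rewrite /sig' (sigma_eq srho erho pLam) mulmx_sumr mulmx_suml.
by apply: eq_bigr => x _; rewrite /Pt !tensmx_mul mul1mx mulmx1.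
Qed.

Lemma Ax_psd x : psdmx (Ax x).
Proof. rewrite /Ax -{2}Pi_herm; apply: psd_congr; exact: (Bx_psd srho erho pLam). Qed.

Lemma Ax_sum : \sum_(x < k) Ax x = Mm.
Proof. by rewrite /Ax -mulmx_suml -mulmx_sumr (Bx_sum srho erho pLam). Qed.

Lemma Ax_fix x : Pi *m Ax x *m Pi = Ax x.
Proof. exact: idem_sand Pi_idem. Qed.

Lemma ptrB_sig : ptrB sig' = \sum_(x < k) \tr (Ax x) *: delta_mx x x.
Proof. by rewrite sig'_eq ptrB_sum; apply: eq_bigr => x _; rewrite ptrB_tens. Qed.

Lemma ptrA_sig : ptrA sig' = Mm.
Proof.
rewrite sig'_eq ptrA_sum -Ax_sum; apply: eq_bigr => x _.
by rewrite ptrA_tens tr_delta scale1r.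
Qed.

Lemma tr_sig' : \tr sig' = tt%:C%C.
Proof.
rewrite sig'_eq raddf_sum /=.
under eq_bigr => x _ do rewrite tr_tens tr_delta mul1r.
by rewrite -raddf_sum /= Ax_sum tr_Mm.
Qed.

Lemma sig'_psd : psdmx sig'.
Proof.
rewrite /sig' -{2}Pt_herm; apply: psd_congr; exact: (psd_sigma srho erho pLam).
Qed.

Lemma ptrB_psd : psdmx (ptrB sig').
Proof.
rewrite ptrB_sig; apply: psd_sum => x _; apply: psd_scale; last exact: psd_delta.
exact: psd_tr_ge0 (Ax_psd x).
Qed.

Lemma loew : psdmx ((θ^-1)%:C%C *: (ptrB sig' *t Mm) - sig').
Proof.
have -> : (θ^-1)%:C%C *: (ptrB sig' *t Mm) - sig' = \sum_(x < k) (delta_mx x x *t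
    (((θ^-1)%:C%C * \tr (Ax x)) *: (Mm - θ%:C%C *: Pi) + (\tr (Ax x) *: Pi - Ax x))).
  rewrite ptrB_sig sig'_eq tensmx_suml scaler_sumr -sumrB; apply: eq_bigr => x _.
  rewrite tensmxZl !(tensmxDr, tensmxNr, tensmxZr).
  set c := \tr (Ax x); set D := delta_mx x x *t Mm; set E := delta_mx x x *t Pi.
  set F := delta_mx x x *t Ax x.
  have h : (θ^-1)%:C%C * c * θ%:C%C = c.
    by rewrite mulrAC -rmorphM mulVf ?gt_eqF // rmorph1 mul1r.
  by rewrite scalerBr !scalerA h addrA subrK.
apply: psd_sum => x _; apply: psd_tens; first exact: psd_delta.
apply: psd_add.
  apply: psd_scale; last exact: Mm_ge.
  by apply: mulr_ge0; [rewrite ler0c invr_ge0 ltW | exact: psd_tr_ge0 (Ax_psd x)].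
have := psd_congr Pi (psd_le_tr (Ax_psd x)).
rewrite Pi_herm mulmxBr mulmxBl Ax_fix -scalemxAr -scalemxAl mulmx1 Pi_idem //.
Qed.


Lemma fid : trnorm (sqrtm (sigmaXR rho U Lam) *m sqrtm sig') = tt.
Proof.
have pσ := psd_sigma srho erho pLam.
have [pSs SSs] := sqrtm_spec pσ.
have [pT TT] := sqrtm_spec sig'_psd.
move: pSs SSs pT TT.
set σ := sigmaXR rho U Lam; set Ss := sqrtm σ; set T := sqrtm sig'.
move=> pSs SSs pT TT.
have hT := psd_herm pT; have hS := psd_herm pSs.
have P1 : (1%:M - Pt) *m Pt = 0 by rewrite mulmxBl mul1mx Pt_idem subrr.
have P2 : Pt *m (1%:M - Pt) = 0 by rewrite mulmxBr mulmx1 Pt_idem subrr.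
have Y0 : T *m (1%:M - Pt) = 0.
  apply: adjmul0; rewrite adj_mul adjB adj1 Pt_herm hT mulmxA -(mulmxA _ T T) TT /sig'.
  by rewrite !mulmxA P1 !mul0mx.
have TP : T = T *m Pt.
  by apply/eqP; rewrite -subr_eq0 -[X in X - _]mulmx1 -mulmxBr Y0.
have PT : T = Pt *m T.
  by rewrite -[LHS]hT {1}TP adj_mul Pt_herm hT.
have e1 : T *m σ *m T = T *m sig' *m T.
  have -> : T *m σ *m T = T *m Pt *m σ *m (Pt *m T) by rewrite -TP -PT.
  by rewrite /sig' !mulmxA.
have key : adj (Ss *m T) *m (Ss *m T) = T *m T *m (T *m T).
  rewrite adj_mul hT hS !mulmxA -(mulmxA T Ss Ss) SSs e1 -TT !mulmxA //.
rewrite /trnorm key (@sqrtm_uniq _ _ _ (T *m T)); last by rewrite mulmxA.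
  by rewrite TT /trR tr_sig'.
by rewrite -{2}hT; apply: psd_mul_adj.
Qed.


Lemma trR_sigma : trR (sigmaXR rho U Lam) = 1.
Proof. by rewrite /trR (tr_sigma srho erho pLam). Qed.

Lemma trR_sig' : trR sig' = tt.
Proof. by rewrite /trR tr_sig'. Qed.

Lemma pd_eq : purified_dist (sigmaXR rho U Lam) sig' = Num.sqrt (1 - tt ^+ 2).
Proof.
by rewrite /purified_dist /gfid fid trR_sigma subrr mul0r sqrtr0 addr0.
Qed.

Lemma in_ball r : 0 <= r -> 2 * (1 - tt) <= r ^+ 2 ->
  sball r (sigmaXR rho U Lam) sig'.
Proof.
move=> r0 hr; split.
  by split; [exact: sig'_psd | rewrite trR_sig'; exact: tt_le1].
rewrite pd_eq -(ger0_norm r0) -sqrtr_sqr; apply: ler_wsqrtr.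
apply: le_trans hr.
have := tt_ge0; have := tt_le1; nra.
Qed.

Lemma Imax_le l : θ^-1 <= 2 `^ l -> (Imax sig' <= l%:E)%E.
Proof.
move=> hl; rewrite /Imax ptrA_sig; apply: (Dmax_le (a := θ^-1)) => //.
  exact: psd_tens ptrB_psd Mm_psd.
exact: loew.
Qed.

Lemma Imax1_le l : 0 < tt -> θ^-1 <= 2 `^ l -> (Imax1 sig' <= l%:E)%E.
Proof.
move=> t0 hl; set τ := (tt^-1)%:C%C *: Mm.
have sτ : state τ.
  split; first by apply: psd_scale; [rewrite ler0c invr_ge0 ltW | exact: Mm_psd].
  by rewrite /τ mxtraceZ tr_Mm -rmorphM mulVf ?gt_eqF.
apply: (@le_trans _ _ (Dmax sig' (ptrB sig' *t τ))).
  by apply: ereal_inf_lbound; exists τ.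
apply: (Dmax_le (a := tt * θ^-1)).
- apply: psd_tens; first exact: ptrB_psd.
  by apply: psd_scale; [rewrite ler0c invr_ge0 ltW | exact: Mm_psd].
- rewrite /τ tensmxZr scalerA -rmorphM mulrAC mulrV ?unitfE ?gt_eqF // mul1r.
  exact: loew.
- apply: le_trans hl; apply: ler_piMl; [by rewrite invr_ge0 ltW | exact: tt_le1].
Qed.

End P4.


Section P5.
Variable R : realType.
Local Notation C := (R[i]).

Lemma core n k (rho U : 'M[C]_n) (lam : 'rV[R]_n) (Lam : 'I_k -> 'M[C]_n) (δ r : R) :
  state rho -> eigdec rho U lam -> povm Lam -> 0 < δ -> δ <= 1/4 -> 0 <= r ->
  4 * δ <= r ^+ 2 ->
  (0 < dd rho δ)%N /\
  forall l, (dd rho δ)%:R / δ <= 2 `^ l ->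
  (Imax_s r (sigmaXR rho U Lam) <= l%:E)%E /\ (Imax1_s r (sigmaXR rho U Lam) <= l%:E)%E.
Proof.
move=> srho erho pLam d0 d1 r0 hr.
have d01 : 0 < δ < 1 by rewrite d0 /=; apply: (le_lt_trans d1); lra.
have [dpos hw] := weight srho erho d01.
split => // l hl.
have eV := chosen_spec erho.
set d := dd rho δ in dpos hw hl.
set θ := δ / d%:R in hw.
have th0 : 0 < θ by rewrite divr_gt0 // ltr0n.
have tw := tt_w srho θ eV.
have hr' : 2 * (1 - tt (chosen_eig rho).2 θ) <= r ^+ 2.
  by rewrite tw; apply: le_trans hr; lra.
have hl' : θ^-1 <= 2 `^ l by rewrite /θ invf_div.
have tpos : 0 < tt (chosen_eig rho).2 θ.
  have : 1 - tt (chosen_eig rho).2 θ <= 2 * δ by rewrite tw.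
  lra.
split.
  apply: le_trans (Imax_le srho erho pLam eV th0 hl').
  by apply: ereal_inf_lbound; exists (sig' rho U Lam (chosen_eig rho).1 (chosen_eig rho).2 θ);
    [apply: (in_ball srho erho pLam eV) | ].
apply: le_trans (Imax1_le srho erho pLam eV th0 tpos hl').
by apply: ereal_inf_lbound; exists (sig' rho U Lam (chosen_eig rho).1 (chosen_eig rho).2 θ);
  [apply: (in_ball srho erho pLam eV) | ].
Qed.


Lemma Hmaxt_eq n (rho : 'M[C]_n) δ : (0 < dd rho δ)%N ->
  Hmaxt δ rho = ((log2 (dd rho δ)%:R)%:E)%E.
Proof. by rewrite lt0n /Hmaxt /dd /= => /negPf ->. Qed.

Lemma pow_bound (x l : R) : 0 < x -> ln x <= l * ln 2 -> x <= 2 `^ l.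
Proof.
move=> x0 h; rewrite /powR ifF ?pnatr_eq0 //.
have e : sequences.expR (ln x) = x by apply: lnK; rewrite posrE.
by rewrite -[X in X <= _]e ler_expR.
Qed.

Lemma num_bound (d : nat) (eps c c2 : R) : (0 < d)%N -> 0 < eps < 1 -> 0 < c ->
  - ln c <= (c2 - 2) * (- ln eps) ->
  d%:R / (c * eps ^+ 2) <= 2 `^ (log2 d%:R + c2 * `|log2 eps|).
Proof.
move=> dp /andP[e0 e1] c0 h.
have d0 : 0 < d%:R :> R by rewrite ltr0n.
have e20 : 0 < eps ^+ 2 by rewrite exprn_gt0.
have ce0 : 0 < c * eps ^+ 2 by rewrite mulr_gt0.
apply: pow_bound; first by rewrite divr_gt0.
have L0 : ln eps < 0 by rewrite ln_lt0 // e0 e1.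
have T0 : 0 < ln 2 :> R by rewrite ln_gt0 // ltr1n.
have e2 : `|log2 eps| = - (ln eps / ln 2).
  by rewrite ltr0_norm // /log2 pmulr_llt0 // invr_gt0.
rewrite e2 /log2 lnM ?posrE ?invr_gt0 // lnV ?posrE // lnM ?posrE // lnXn //.
have -> : (ln d%:R / ln 2 + c2 * - (ln eps / ln 2)) * ln 2 = ln d%:R - c2 * ln eps.
  by field; rewrite gt_eqF.
rewrite mulr2n; lra.
Qed.

End P5.

Theorem lemma3 (R : realType) :
  (exists c1 c2 : R, 0 < c1 /\ 0 <= c2 /\
    forall (n k : nat) (rho U : 'M[R[i]]_n) (lam : 'rV[R]_n)
           (Lam : 'I_k -> 'M[R[i]]_n) (eps : R),
      state rho -> eigdec rho U lam -> povm Lam ->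
      0 < eps <= 1 / 4 ->
      (Imax1_s eps (sigmaXR rho U Lam)
        <= Hmaxt (c1 * eps ^+ 2) rho + (c2 * `|log2 eps|)%:E)%E) /\
  (exists d1 d2 d3 : R, 0 < d1 /\ 0 <= d2 /\ 0 <= d3 /\
    forall (n k : nat) (rho U : 'M[R[i]]_n) (lam : 'rV[R]_n)
           (Lam : 'I_k -> 'M[R[i]]_n) (eps eps' : R),
      state rho -> eigdec rho U lam -> povm Lam ->
      0 < eps <= 1 / 4 -> 0 < eps' <= Num.min (eps / 3) (1 / 4) ->
      (Imax_s (2 * eps) (sigmaXR rho U Lam)
        <= Hmaxt (d1 * eps ^+ 2) rho + (d2 * `|log2 eps|)%:E
           + (d3 * `|log2 (eps' ^+ 2 / 12)|)%:E)%E).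
Proof.
split.
  exists (1/4), 3; split; first lra; split; first lra.
  move=> n k rho U lam Lam eps srho erho pLam /andP[e0 e1].
  have e2 : 0 < eps ^+ 2 by rewrite exprn_gt0.
  have e3 : eps ^+ 2 <= eps by rewrite expr2 ler_piMl ?ltW //; lra.
  have [dpos H] := core (δ := 1/4 * eps ^+ 2) (r := eps) srho erho pLam
    ltac:(by rewrite mulr_gt0 //; lra) ltac:(by lra) ltac:(by lra) ltac:(by lra).
  rewrite (Hmaxt_eq dpos) -EFinD; apply: (H _ _).2.
  apply: num_bound; [exact: dpos | by rewrite e0 /=; lra | lra | ].
  have : ln eps <= ln (1/4) by rewrite ler_ln ?posrE //; lra.
  lra.
exists 1, 2, 0; split; first lra; split; first lra; split; first lra.
move=> n k rho U lam Lam eps eps' srho erho pLam /andP[e0 e1] _.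
have e2 : 0 < eps ^+ 2 by rewrite exprn_gt0.
have e3 : eps ^+ 2 <= eps by rewrite expr2 ler_piMl ?ltW //; lra.
have [dpos H] := core (δ := 1 * eps ^+ 2) (r := 2 * eps) srho erho pLam
  ltac:(by lra) ltac:(by lra) ltac:(by lra) ltac:(by rewrite expr2; rewrite expr2 in e3 e2; nra).
rewrite mul0r adde0 (Hmaxt_eq dpos) -EFinD; apply: (H _ _).1.
apply: num_bound; [exact: dpos | by rewrite e0 /=; lra | lra | ].
rewrite ln1; lra.
Qed.
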